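(* Let $n$ be an odd positive integer. Then $d_{\mathrm{GED}}(T_{\mathrm{ord}}, T_{\mathrm{rps}}) = \frac{1}{8}(n^2-1)$, where $T_{\mathrm{ord}}$ and $T_{\mathrm{rps}}$ are the ordered and rock-paper-scissors tournaments on $n$ players defined below.
   Context: A tournament on a finite set $V$ of players is a directed graph with vertex set $V$ such that for every two distinct vertices $u,v$ there is exactly one of the edges $(u,v)$, $(v,u)$; the edge $(u,v)$ means that $u$ beats $v$. Two tournaments $(V_1,E_1)$ and $(V_2,E_2)$ are isomorphic if there is a bijection $\pi\colon V_1\to V_2$ with $(u,v)\in E_1$ iff $(\pi(u),\pi(v))\in E_2$. For tournaments $T_1,T_2$ on the same number of players, the graph edit distance $d_{\mathrm{GED}}(T_1,T_2)$ is the minimum number of edges of $T_1$ whose orientation must be reversed so that the resulting tournament is isomorphic to $T_2$. The ordered tournament $T_{\mathrm{ord}}$ on $n$ players is the transitive tournament: the players are $v_1,\dots,v_n$ and $v_i$ beats $v_j$ whenever $i<j$. The tournament $T_{\mathrm{rps}}$ on $n$ players has players $v_0,\dots,v_{n-1}$ and, for each $i\in\{0,\dots,n-1\}$, edges from $v_i$ to each of $v_{(i+1)\bmod n},\dots,v_{(i+\lfloor n/2\rfloor)\bmod n}$ (for odd $n$ this is well defined and every player beats exactly $(n-1)/2$ others). *)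

(* Defs.v *)
From mathcomp Require Import all_boot.
Set Implicit Arguments. Unset Strict Implicit. Unset Printing Implicit Defensive.

(* A tournament on a finite player set T is a relation e : rel T
   (e u v means "u beats v") such that for distinct u, v exactly one of
   e u v, e v u holds, and no player beats itself. *)
Definition is_tournament (T : finType) (e : rel T) : bool :=
  [forall u, ~~ e u u] && [forall u, forall v, (u != v) ==> (e u v != e v u)].

(* Isomorphism of relations on T via a bijection pi of T (an injective
   self-map of a finite type, i.e. a bijection). *)
Definition tour_iso (T : finType) (e1 e2 : rel T) : bool :=
  [exists pi : {ffun T -> T}, injectiveb pi &&
     [forall u, forall v, e1 u v == e2 (pi u) (pi v)]].

(* Number of edges of e1 whose orientation differs in e' (edges (u,v) of e1
   that are not edges of e'); for tournaments this is the number of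
   reversed edges needed to turn e1 into e'. *)
Definition nflips (T : finType) (e1 e' : rel T) : nat :=
  #|[set p : T * T | e1 p.1 p.2 && ~~ e' p.1 p.2]|.

(* The candidate tournaments range over all
   relations on T (encoded as finite functions); the default value
   #|T| ^ 2 of the minimum is never attained when e2 itself is a candidate,
   since any count is at most #|T|^2. *)
Definition d_GED (T : finType) (e1 e2 : rel T) : nat :=
  \big[minn/(#|T| ^ 2)]_(f : {ffun T -> {ffun T -> bool}}
      | is_tournament (fun u v => f u v)
        && tour_iso (fun u v => f u v) e2)
     nflips e1 (fun u v => f u v).

Definition T_ord (n : nat) : rel 'I_n := fun i j => (i < j)%N.

Definition T_rps (n : nat) : rel 'I_n :=
  fun i j => let d := ((j + n - i) %% n)%N in (0 < d)%N && (d <= n./2)%N.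
Arguments T_ord n : clear implicits.
Arguments T_rps n : clear implicits.

(* Main.v *)
Require Import Defs.
From mathcomp Require Import all_boot.
From mathcomp Require Import zify.

Lemma modE n w x : w < n -> x < n ->
  (x + n - w) %% n = if w <= x then x - w else x + n - w.
Proof.
move=> hw hx; case: leqP => h.
  have -> : x + n - w = (x - w) + n by lia.
  rewrite modnDr modn_small //; lia.
rewrite modn_small //; lia.
Qed.

Lemma rpsE k (w x : 'I_(k.*2.+1)) :
  T_rps _ w x = ((w < x) && (x <= w + k)) || (x + k < w).
Proof.
rewrite /T_rps modE //= uphalf_double.
have hw := ltn_ord w; have hx := ltn_ord x; case: (leqP w x) => h; lia.
Qed.

Lemma sum_interval n a b :
  \sum_(w < n) ((a <= w) && (w < b) : nat) = minn b n - a.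
Proof.
elim: n => [|n IH]; first by rewrite big_ord0; lia.
rewrite big_ord_recr /= IH.
case: (leqP a n) => h1; case: (ltnP n b) => h2 /=; lia.
Qed.

Lemma card_pairs (T : finType) (P : T -> T -> bool) :
  #|[set p : T * T | P p.1 p.2]| = \sum_u \sum_v (P u v : nat).
Proof.
rewrite pair_big /= -sum1_card big_mkcond /=.
apply: eq_bigr => p _; rewrite inE; by case: (P _ _).
Qed.

Lemma nflipsE (T : finType) (e1 e' : rel T) :
  nflips e1 e' = \sum_u \sum_v ((e1 u v && ~~ e' u v) : nat).
Proof.
rewrite /nflips pair_big /= -sum1_card big_mkcond /=.
apply: eq_bigr => p _; rewrite inE; by case: (_ && _).
Qed.

Lemma sum_tail k m : k <= m -> \sum_(u < m) (k - u) = \sum_(u < k) (k - u).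
Proof.
elim: m => [|m IH] h.
  have -> : k = 0 by lia. by [].
case: (leqP k m) => h2.
  rewrite big_ord_recr /= IH //. have -> : k - m = 0 by lia. by rewrite addn0.
have -> : k = m.+1 by lia. by [].
Qed.

Lemma sum_tri k : 2 * \sum_(u < k) (k - u) = k * k.+1.
Proof.
elim: k => [|k IH]; first by rewrite big_ord0.
rewrite big_ord_recr /=.
have -> : \sum_(i < k) (k.+1 - i) =
          \sum_(i < k) (k - i) + \sum_(i < k) 1.
  rewrite -big_split /=; apply: eq_bigr => i _ /=.
  have := ltn_ord i; lia.
rewrite sum1_card card_ord; lia.
Qed.

Lemma indeg k (x : 'I_(k.*2.+1)) : \sum_(w < k.*2.+1) (T_rps _ w x : nat) = k.
Proof.
have -> : \sum_(w < k.*2.+1) (T_rps _ w x : nat) =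
   \sum_(w < k.*2.+1) (((x - k) <= w) && (w < x) : nat) +
   \sum_(w < k.*2.+1) (((x + k).+1 <= w) && (w < k.*2.+1) : nat).
  rewrite -big_split /=; apply: eq_bigr => w _; rewrite rpsE.
  have := ltn_ord w; have := ltn_ord x.
  case: (leqP (x - k) w); case: (ltnP w x); case: (leqP (x + k).+1 w);
  case: (leqP x (w + k)) => /= *; lia.
rewrite !sum_interval; have := ltn_ord x; lia.
Qed.

Lemma bigmin_leq (I : finType) x (P : pred I) (F : I -> nat) j :
  P j -> \big[minn/x]_(i | P i) F i <= F j.
Proof.
move=> Pj; have : j \in index_enum I by rewrite mem_index_enum.
elim: (index_enum I) => // a r IH.
rewrite big_cons in_cons; case/orP => [/eqP <-| jr].
  by rewrite Pj geq_minl.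
case: (P a); last exact: IH.
exact: leq_trans (geq_minr _ _) (IH jr).
Qed.

Theorem proposition1 (n : nat) (n_odd : odd n) :
  d_GED (T_ord n) (T_rps n) = ((n * n - 1) %/ 8)%N.
Proof.
have [k hn] : exists k, n = k.*2.+1.
  exists n./2; by rewrite -[n in LHS]odd_double_half n_odd add1n.
subst n.
have Htri := sum_tri k.
have Htarget : ((k.*2.+1 * k.*2.+1 - 1) %/ 8) = \sum_(u < k) (k - u).
  have -> : k.*2.+1 * k.*2.+1 - 1 = 8 * \sum_(u < k) (k - u) by lia.
  by rewrite mulKn.
rewrite Htarget -(@sum_tail k k.*2.+1); last by lia.
set N := k.*2.+1. have hN : N = k.*2.+1 by [].
apply/eqP; rewrite eqn_leq; apply/andP; split.
-
  set f0 : {ffun 'I_N -> {ffun 'I_N -> bool}} := [ffun u => [ffun v => T_rps N u v]].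
  have Pf0 : is_tournament (fun u v => f0 u v) && tour_iso (fun u v => f0 u v) (T_rps N).
    apply/andP; split.
      apply/andP; split.
        apply/forallP => u; rewrite !ffunE rpsE; lia.
      apply/forallP => u; apply/forallP => v; apply/implyP => huv.
      rewrite !ffunE !rpsE.
      have := ltn_ord u; have := ltn_ord v.
      case: (ltngtP u v) huv => h huv; last first.
        by move: huv; rewrite (val_inj h) eqxx.
      + lia.
      + lia.
    apply/existsP; exists [ffun x => x]; apply/andP; split.
      by apply/injectiveP => x y; rewrite !ffunE.
    by apply/forallP => u; apply/forallP => v; rewrite !ffunE.
  rewrite /d_GED.
  apply: leq_trans (@bigmin_leq _ _
     (fun f : {ffun 'I_N -> {ffun 'I_N -> bool}} => is_tournament (fun u v => f u v) && tour_iso (fun u v => f u v) (T_rps N))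
     (fun f : {ffun 'I_N -> {ffun 'I_N -> bool}} => nflips (T_ord N) (fun u v => f u v)) f0 Pf0) _.
  rewrite nflipsE leq_eqVlt; apply/orP; left; apply/eqP.
  apply: eq_bigr => u _.
  have -> : \sum_v ((T_ord N u v && ~~ f0 u v) : nat) =
            \sum_(v < N) (((u + k).+1 <= v) && (v < N) : nat).
    apply: eq_bigr => v _; rewrite !ffunE rpsE /T_ord.
    have := ltn_ord v; have := ltn_ord u.
    case: (ltnP u v); case: (leqP (val v) (u + k)); case: (leqP (v + k).+1 u);
    case: (leqP (u + k).+1 v) => /= *; lia.
  rewrite sum_interval; have := ltn_ord u; lia.
-
  rewrite /d_GED; apply: (big_ind (fun x => \sum_(u < N) (k - u) <= x)).
  + rewrite sum_tail; last by lia. rewrite card_ord; nia.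
  + move=> x y hx hy; by rewrite leq_min hx hy.
  + move=> f /andP [_ /existsP [pi /andP [/injectiveP pi_inj /forallP H]]].
    rewrite nflipsE; apply: leq_sum => u _.
    have Hf : forall v, f u v = T_rps N (pi u) (pi v).
      by move=> v; apply/eqP; exact: (forallP (H u) v).
    have Hf' : forall v, f v u = T_rps N (pi v) (pi u).
      by move=> v; apply/eqP; exact: (forallP (H v) u).
    have Hin : \sum_(v < N) (T_rps N (pi v) (pi u) : nat) = k.
      by have := indeg k (pi u); rewrite (reindex_inj pi_inj).
    have Hlt : \sum_(v < N) ((0 <= v) && (v < u) : nat) = u.
      rewrite sum_interval; have := ltn_ord u; lia.
    have Hle : \sum_(v < N) (T_rps N (pi v) (pi u) : nat) <=
       \sum_v ((T_ord N u v && ~~ f u v) : nat) +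
       \sum_(v < N) ((0 <= v) && (v < u) : nat).
      rewrite -big_split /=; apply: leq_sum => v _.
      rewrite Hf /T_ord.
      case: (ltngtP u v) => h.
      * have : ~~ (T_rps N (pi v) (pi u) && T_rps N (pi u) (pi v)).
          rewrite !rpsE; have := ltn_ord (pi u); have := ltn_ord (pi v); lia.
        by case: (T_rps _ _ _); case: (T_rps _ _ _).
      * by case: (T_rps _ _ _) => /=; lia.
      * by rewrite -(val_inj h) rpsE; lia.
    rewrite Hin Hlt in Hle; move: Hle; set S := (\sum_v _) => Hle; lia.
Qed.
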